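(* Let $H=(V,\mathcal E)$ be a hypergraph with nonnegative hyperedge weights $w_e$ and total weight $W=\sum_{e\in\mathcal E}w_e$. Let $\epsilon\in(0,1)$ and suppose there is a vertex set $O\subseteq V$ with $|O|=r$ and $e(O)\ge (1-\epsilon)W$, where $e(S)=\sum_{e\in\mathcal E:\,e\subseteq S}w_e$. Let $(x^*,z^* )$ be an optimal solution of the linear program \[\min \sum_{v\in V}x_v \quad\text{s.t.}\quad z_e\le x_v\ \ \forall e\in\mathcal E,\ \forall v\in e;\qquad \sum_{e\in\mathcal E}w_e z_e\ge (1-\epsilon)W;\qquad 0\le x_v,z_e\le 1.\] For $\kappa>0$ let $K=\{v\in V: x^*_v\ge \kappa/(1+\kappa)\}$. Then \[W-e(K)\le (1+\kappa)\,\epsilon W\qquad\text{and}\qquad |K|\le \Bigl(1+\frac1\kappa\Bigr) r.\] *)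

(* Defs.v *)
(* A weighted hypergraph: vertices V : finType, hyperedges
   indexed by E : finType, each hyperedge e having vertex set ed e. *)
From mathcomp Require Import all_boot all_order all_algebra.
Set Implicit Arguments. Unset Strict Implicit. Unset Printing Implicit Defensive.
Import Order.TTheory GRing.Theory Num.Theory.
Local Open Scope ring_scope.

Definition total_weight (R : realFieldType) (E : finType) (w : E -> R) : R :=
  \sum_(e : E) w e.

Definition induced_weight (R : realFieldType) (V E : finType)
  (ed : E -> {set V}) (w : E -> R) (S : {set V}) : R :=
  \sum_(e : E | ed e \subset S) w e.

Definition lp_feasible (R : realFieldType) (V E : finType)
  (ed : E -> {set V}) (w : E -> R) (eps : R) (x : V -> R) (z : E -> R) : Prop :=
  [/\ (forall e v, v \in ed e -> z e <= x v),
      (1 - eps) * total_weight w <= \sum_(e : E) w e * z e,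
      (forall v, 0 <= x v <= 1) &
      (forall e, 0 <= z e <= 1)].

Definition lp_optimal (R : realFieldType) (V E : finType)
  (ed : E -> {set V}) (w : E -> R) (eps : R) (x : V -> R) (z : E -> R) : Prop :=
  lp_feasible ed w eps x z /\
  forall x' z', lp_feasible ed w eps x' z' ->
    \sum_(v : V) x v <= \sum_(v : V) x' v.

(* Main.v *)
Require Import Defs.
From mathcomp Require Import all_boot all_order all_algebra.
From mathcomp Require Import ring lra.
Import Order.TTheory GRing.Theory Num.Theory.
Local Open Scope ring_scope.

Lemma b01 (R : realFieldType) (b : bool) : 0 <= (b%:R : R) <= 1.
Proof. by case: b; rewrite /= ?lexx ?ler01. Qed.

Theorem theorem1 (R : realFieldType) (V E : finType) (ed : E -> {set V})
  (w : E -> R) (eps : R) (O : {set V}) (r : nat) (x : V -> R) (z : E -> R)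
  (kappa : R) :
  (forall e, 0 <= w e) ->
  0 < eps < 1 ->
  #|O| = r ->
  (1 - eps) * total_weight w <= induced_weight ed w O ->
  lp_optimal ed w eps x z ->
  0 < kappa ->
  let K := [set v | kappa / (1 + kappa) <= x v] in
  total_weight w - induced_weight ed w K <= (1 + kappa) * eps * total_weight w /\
  (#|K|%:R <= (1 + kappa^-1) * r%:R :> R).
Proof.
move=> w0 /andP[e0 e1] hO hOw hopt0 k0 K.
move: hopt0; rewrite /lp_optimal {1}/lp_feasible => -[[hz hsum hx hzb] hopt].
set c := kappa / (1 + kappa).
have k1 : 0 < 1 + kappa by rewrite addr_gt0.
have k1n : 1 + kappa != 0 by rewrite gt_eqF.
have c0 : 0 <= c by rewrite divr_ge0 // ltW.
split.
- set A := induced_weight ed w K.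
  set b := \sum_(e | ~~ (ed e \subset K)) w e.
  have hW : total_weight w = A + b by rewrite /total_weight (bigID (fun e => ed e \subset K)).
  have hzs : \sum_e w e * z e <= A + c * b.
    rewrite (bigID (fun e => ed e \subset K)) /= /A /b /induced_weight mulr_sumr.
    apply: lerD; apply: ler_sum => e He.
      by rewrite -[X in _ <= X]mulr1 ler_wpM2l //; case/andP: (hzb e).
    rewrite mulrC ler_wpM2r //.
    case/subsetPn: He => v Hv HvK.
    apply: le_trans (hz e v Hv) _.
    by move: HvK; rewrite inE -ltNge => /ltW.
  have hb : b * (1 - c) <= eps * (A + b).
    have := le_trans hsum hzs; rewrite hW => h. nra.
  have hc : (1 + kappa) * (1 - c) = 1.
    by rewrite /c mulrBr mulr1 mulrCA divff // mulr1 addrK.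
  have b0 : 0 <= b by apply: sumr_ge0.
  rewrite hW; have -> : A + b - A = b by rewrite [A + b]addrC addrK.
  have hb' : b = (1 + kappa) * ((1 - c) * b) by rewrite mulrA hc mul1r.
  rewrite {1}hb' -mulrA (ler_wpM2l (ltW k1)) //.
  by rewrite mulrC.
- have hf : lp_feasible ed w eps (fun v => (v \in O)%:R) (fun e => (ed e \subset O)%:R).
    rewrite /lp_feasible; split.
    + move=> e v Hv. case: (boolP (ed e \subset O)) => H //=.
      by rewrite (subsetP H _ Hv).
    + apply: le_trans hOw _. rewrite /induced_weight big_mkcond /=.
      by apply: ler_sum => e _; case: (ed e \subset O); rewrite ?mulr1 ?mulr0.
    + by move=> v; apply: b01.
    + by move=> e; apply: b01.
  have hx' := hopt _ _ hf.
  have hr : \sum_v ((v \in O)%:R : R) = r%:R.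
    rewrite -hO -sum1_card natr_sum [RHS]big_mkcond /=; apply: eq_bigr => v _; by case: (_ \in _).
  rewrite hr in hx'.
  have hK : #|K|%:R * c <= \sum_v x v.
    rewrite -sum1_card natr_sum mulr_suml [X in _ <= X](bigID (fun v => v \in K)) /=.
    rewrite -[X in X <= _]addr0; apply: lerD.
      by apply: ler_sum => v; rewrite mul1r inE.
    by apply: sumr_ge0 => v _; case/andP: (hx v).
  have hc : (1 + kappa^-1) * c = 1.
    rewrite /c; field; apply/andP; split; rewrite gt_eqF //.
  have := le_trans hK hx'.
  move=> h.
  have p : 0 <= 1 + kappa^-1 by rewrite addr_ge0 // invr_ge0 ltW.
  have e : #|K|%:R = (1 + kappa^-1) * (c * #|K|%:R) :> R by rewrite mulrA hc mul1r.
  rewrite {1}e; apply: (ler_wpM2l p); by rewrite mulrC.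
Qed.
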